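(* Let $R$ be a ring and $n\in\{0,1,2,\dots\}\cup\{\infty\}$. Let $f:X^\bullet\to Y^\bullet$ be an $n$-quasi-isomorphism where $X^\bullet$ and $Y^\bullet$ are bounded above complexes of $n$-projective left $R$-modules. Then $f$ is a homotopy equivalence.
   Context: $R$ is an associative ring with identity; modules are left $R$-modules; $\infty+1=\infty$. For a positive integer $k$, $\mathcal{P}^{<k}$ is the class of modules $M$ admitting an exact sequence $0\to P_j\to\cdots\to P_0\to M\to 0$ with $j\le k-1$ and every $P_i$ finitely generated projective; $\mathcal{P}^{<\infty}$ is the class of modules admitting such a sequence for some finite $j$. A short exact sequence is $n$-exact if it stays exact under $\mathrm{Hom}_R(M,-)$ for all $M\in\mathcal{P}^{<n+1}$; a module $P$ is $n$-projective if $\mathrm{Hom}_R(P,-)$ preserves exactness of every $n$-exact sequence. A complex $Z^\bullet$ is $n$-exact if $\mathrm{Hom}_R(P,Z^\bullet)$ is exact for every $P\in\mathcal{P}^{<n+1}$; a cochain map is an $n$-quasi-isomorphism if its mapping cone is $n$-exact. *)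

(* Defs.v *)
From HB Require Import structures.
From mathcomp Require Import all_boot all_algebra.
Set Implicit Arguments. Unset Strict Implicit. Unset Printing Implicit Defensive.
Import GRing.Theory.
Local Open Scope ring_scope.

Inductive natinf := Fin of nat | Inf.
Definition natinf_succ (k : natinf) : natinf :=
  match k with Fin m => Fin m.+1 | Inf => Inf end.
(* j <= k - 1, i.e. j < k (always true for k = infinity) *)
Definition natinf_lt (j : nat) (k : natinf) : Prop :=
  match k with Fin m => (j < m)%N | Inf => True end.

Section Defs.
Variable R : pzRingType.

Definition fin_gen (M : lmodType R) : Prop :=
  exists (n : nat) (s : 'I_n -> M),
    forall x : M, exists r : 'I_n -> R, x = \sum_(i < n) r i *: s i.

Definition projective (P : lmodType R) : Prop :=
  forall (B C : lmodType R) (g : {linear B -> C}),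
    (forall c, exists b, g b = c) ->
    forall w : {linear P -> C}, exists v : {linear P -> B}, forall p, g (v p) = w p.

Definition fgproj (P : lmodType R) : Prop := fin_gen P /\ projective P.

(* exact sequence 0 -> P_j -> ... -> P_0 -> M -> 0 with P_i f.g. projective,
   encoded as an infinite sequence padded with zero modules P_i = 0 for i > j *)
Definition fgproj_resolution (j : nat) (M : lmodType R) : Prop :=
  exists (P : nat -> lmodType R) (d : forall i, {linear P i.+1 -> P i})
         (e : {linear P 0%N -> M}),
  [/\ forall i, fgproj (P i),
      forall i, (j < i)%N -> forall x : P i, x = 0,
      forall m, exists x, e x = m,
      forall x : P 0%N, e x = 0 <-> exists y, d 0%N y = x &
      forall i (x : P i.+1), d i x = 0 <-> exists y, d i.+1 y = x].

Definition Plt (k : natinf) (M : lmodType R) : Prop :=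
  exists j : nat, natinf_lt j k /\ fgproj_resolution j M.

Definition short_exact (A B C : lmodType R) (f : {linear A -> B}) (g : {linear B -> C}) :=
  [/\ injective f, forall b, g b = 0 <-> exists a, f a = b & forall c, exists b, g b = c].

Definition hom_exact (M A B C : lmodType R) (f : {linear A -> B}) (g : {linear B -> C}) :=
  [/\ forall u : {linear M -> A}, (forall m, f (u m) = 0) -> forall m, u m = 0,
      forall v : {linear M -> B},
        (forall m, g (v m) = 0) <-> exists u : {linear M -> A}, forall m, v m = f (u m) &
      forall w : {linear M -> C}, exists v : {linear M -> B}, forall m, w m = g (v m)].

Definition n_exact_ses (n : natinf) (A B C : lmodType R)
    (f : {linear A -> B}) (g : {linear B -> C}) : Prop :=
  short_exact f g /\ forall M, Plt (natinf_succ n) M -> hom_exact M f g.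

Definition n_projective (n : natinf) (P : lmodType R) : Prop :=
  forall (A B C : lmodType R) (f : {linear A -> B}) (g : {linear B -> C}),
    n_exact_ses n f g -> hom_exact P f g.

Record complex := Complex {
  cobj : int -> lmodType R;
  cdif : forall i : int, {linear cobj i -> cobj (i + 1)};
  cdif2 : forall i x, cdif (i + 1) (cdif i x) = 0 }.

Definition bounded_above (X : complex) : Prop :=
  exists N : int, forall i : int, N < i -> forall x : cobj X i, x = 0.

Definition is_cochain_map (X Y : complex) (f : forall i, {linear cobj X i -> cobj Y i}) :=
  forall i x, f (i + 1) (cdif X i x) = cdif Y i (f i x).

Definition n_exact_cplx (n : natinf) (Z : int -> lmodType R)
    (dZ : forall i, Z i -> Z (i + 1)) : Prop :=
  forall P : lmodType R, Plt (natinf_succ n) P ->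
  forall (i : int) (u : {linear P -> Z (i + 1)}),
    (forall p, dZ (i + 1) (u p) = 0) <->
    exists v : {linear P -> Z i}, forall p, u p = dZ i (v p).

Section Cone.
Variables (X Y : complex) (f : forall i, {linear cobj X i -> cobj Y i}).
Definition cone_obj (i : int) : lmodType R := (cobj X (i + 1) * cobj Y i)%type.
Definition cone_dif (i : int) (z : cone_obj i) : cone_obj (i + 1) :=
  (- cdif X (i + 1) z.1, f (i + 1) z.1 + cdif Y i z.2).
End Cone.

Definition n_quasi_iso (n : natinf) (X Y : complex)
    (f : forall i, {linear cobj X i -> cobj Y i}) : Prop :=
  is_cochain_map f /\ n_exact_cplx n (cone_dif f).

Definition homotopy_equiv (X Y : complex) (f : forall i, {linear cobj X i -> cobj Y i}) :=
  exists g : forall i, {linear cobj Y i -> cobj X i},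
  [/\ is_cochain_map g,
      exists h : forall i, {linear cobj X (i + 1) -> cobj X i},
        forall i (x : cobj X (i + 1)),
          g (i + 1) (f (i + 1) x) - x = cdif X i (h i x) + h (i + 1) (cdif X (i + 1) x) &
      exists h : forall i, {linear cobj Y (i + 1) -> cobj Y i},
        forall i (y : cobj Y (i + 1)),
          f (i + 1) (g (i + 1) y) - y = cdif Y i (h i y) + h (i + 1) (cdif Y (i + 1) y)].

End Defs.

(* Main.v *)
From HB Require Import structures.
Require Import Defs.
From mathcomp Require Import all_boot all_algebra.
From Stdlib Require Import ClassicalEpsilon.
Set Implicit Arguments. Unset Strict Implicit.
Import GRing.Theory.
Local Open Scope ring_scope.

Definition mkLin (R : pzRingType) (U V : lmodType R) (h : U -> V) (H : linear h) : {linear U -> V} :=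
  HB.pack h (GRing.isLinear.Build R U V *:%R h H).

Lemma mkLinE R U V h H x : @mkLin R U V h H x = h x. Proof. by []. Qed.

Section Ker.
Variables (R : pzRingType) (U V : lmodType R) (g : {linear U -> V}).
Definition kerP : pred U := fun x => g x == 0.
Definition kerT := {x : U | kerP x}.
HB.instance Definition _ := [isSub of kerT for @sval U kerP].
HB.instance Definition _ := [Choice of kerT by <:].
Lemma ker_closed : subsemimod_closed kerP.
Proof.
split. split. by rewrite unfold_in /= linear0.
move=> x y; rewrite !unfold_in /= => /eqP hx /eqP hy. by rewrite linearD hx hy addr0.
move=> a x; rewrite !unfold_in /= => /eqP hx. by rewrite linearZ_LR hx scaler0.
Qed.
HB.instance Definition _ := GRing.SubChoice_isSubLmodule.Build R U kerP kerT ker_closed.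
Lemma val_lin : linear (fun x : kerT => val x).
Proof. move=> a x y. by []. Qed.
End Ker.

Definition icast (F : int -> Type) (G : forall j, F (j+1)) (i : int) : F i :=
  eq_rect (i - 1 + 1) F (G (i - 1)) i (subrK 1 i).
Arguments icast : clear implicits.
Lemma icastE (F : int -> Type) (G : forall j, F (j+1)) (j : int) : icast F G (j+1) = G j.
Proof.
rewrite /icast.
suff: forall k (e : k + 1 = j + 1), eq_rect (k+1) F (G k) (j+1) e = G j by apply.
move=> k e. have kj : k = j by apply: (addIr 1).
subst k. by rewrite (eq_irrelevance e erefl).
Qed.
Lemma int_ind1 (Q : int -> Prop) : (forall j, Q (j+1)) -> forall i, Q i.
Proof. move=> H i. rewrite -(subrK 1 i). apply: H. Qed.

Section Gen.
Variable R : pzRingType.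

Lemma zlin_lin (U V : lmodType R) : linear (fun _ : U => 0 : V).
Proof. by move=> a x y; rewrite /= scaler0 addr0. Qed.
Definition zlin (U V : lmodType R) : {linear U -> V} := mkLin (@zlin_lin U V).
Lemma zlinE (U V : lmodType R) x : zlin U V x = 0. Proof. by []. Qed.

Lemma rlin_lin (V : lmodType R) (z : V) : linear (fun r : R^o => (r : R) *: z).
Proof. by move=> a x y; rewrite /= scalerDl scalerA. Qed.
Definition rlin (V : lmodType R) (z : V) : {linear R^o -> V} := mkLin (rlin_lin z).
Lemma rlin1 (V : lmodType R) (z : V) : rlin z 1 = z. Proof. by rewrite /= scale1r. Qed.

Definition lift_prop (n : natinf) (P : lmodType R) :=
  forall (A B C : lmodType R) (f : {linear A -> B}) (g : {linear B -> C}),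
    n_exact_ses n f g -> forall w : {linear P -> C}, exists v : {linear P -> B}, forall m, w m = g (v m).

Lemma nproj_lift n P : n_projective n P -> lift_prop n P.
Proof. move=> H A B C f g hs w. by case: (H A B C f g hs) => _ _ /(_ w). Qed.

Definition zmodule : lmodType R := 'rV[R]_0.
Lemma zmod0 (x : zmodule) : x = 0. Proof. by apply/matrixP => i [j hj]. Qed.

Definition resP (i : nat) : lmodType R := match i with 0%N => R^o | _.+1 => zmodule end.

Lemma fgproj_reg : fgproj R^o.
Proof.
split.
  exists 1%N, (fun _ => (1 : R^o)) => x; exists (fun _ => x).
  rewrite big_ord1 /=. exact: (esym (mulr1 (x : R))).
move=> B C g gs w. case: (gs (w 1)) => b hb.
exists (rlin b) => p. rewrite /= linearZ_LR hb -linearZ_LR /=.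
congr (w _). exact: (mulr1 (p : R)).
Qed.

Lemma fgproj_zmod : fgproj zmodule.
Proof.
split.
  exists 0%N, (fun _ => 0) => x; exists (fun _ => 0).
  by rewrite big_ord0; apply: zmod0.
move=> B C g gs w. exists (zlin _ _) => p. by rewrite (zmod0 p) !linear0.
Qed.

Lemma Plt_reg n : Plt (natinf_succ n) R^o.
Proof.
exists 0%N; split; first by case: n.
exists resP.
exists (fun i => zlin (resP i.+1) (resP i)).
exists (@mkLin R (resP 0) R^o (fun x => x) (fun a x y => erefl)).
split.
- by case=> [|i]; [exact: fgproj_reg | exact: fgproj_zmod].
- by case=> [|i] // _ x; exact: zmod0.
- by move=> m; exists m.
- move=> x /=; split; first by move=> ->; exists 0.
  by case=> y <-.
- move=> i x /=; split.
    by move=> _; exists 0; rewrite (zmod0 x).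
  by move=> _.
Qed.

End Gen.

Lemma zh (V : zmodType) (a x w : V) : a + (x - w - (a - w)) = x.
Proof. by rewrite opprB (addrA (x - w) w (-a)) subrK (addrC a) subrK. Qed.

Lemma zh2 (V : zmodType) (a b c : V) : c - (-a + (-b + c)) = a + b.
Proof. by rewrite opprD opprK opprD opprK addrCA addrA -(addrA a) (addrC c) subrK. Qed.

Lemma zh3 (V : zmodType) (a b c : V) : a - (a + b + c) = - b + - c.
Proof. by rewrite -addrA opprD addrA subrr add0r opprD. Qed.

Section Comb.
Variable R : pzRingType.
Implicit Types U V W : lmodType R.
Lemma lin_add U V (f g : {linear U -> V}) : linear (fun x => f x + g x).
Proof. move=> a x y /=. by rewrite !linearD !linearZ_LR scalerDr addrACA. Qed.
Lemma lin_opp U V (f : {linear U -> V}) : linear (fun x => - f x).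
Proof. move=> a x y /=. by rewrite (linearP f) opprD scalerN. Qed.
Lemma lin_comp U V W (f : {linear V -> W}) (g : {linear U -> V}) : linear (fun x => f (g x)).
Proof. move=> a x y /=. by rewrite !linearD !linearZ_LR. Qed.
Lemma lin_fst U V : linear (fun z : (U * V)%type => z.1). Proof. by []. Qed.
Lemma lin_snd U V : linear (fun z : (U * V)%type => z.2). Proof. by []. Qed.
Lemma lin_id U : linear (fun z : U => z). Proof. by []. Qed.
Lemma lin_pair U V W (f : {linear U -> V}) (g : {linear U -> W}) : linear (fun x => (f x, g x)).
Proof. move=> a x y /=. by rewrite !linearD !linearZ_LR. Qed.
Definition addL U V (f g : {linear U -> V}) := mkLin (lin_add f g).
Definition oppL U V (f : {linear U -> V}) := mkLin (lin_opp f).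
Definition compL U V W (f : {linear V -> W}) (g : {linear U -> V}) := mkLin (lin_comp f g).
Definition fstL U V := mkLin (@lin_fst U V).
Definition sndL U V := mkLin (@lin_snd U V).
Definition idL U := mkLin (@lin_id U).
Definition pairL U V W (f : {linear U -> V}) (g : {linear U -> W}) := mkLin (lin_pair f g).
Definition inlL U V : {linear U -> (U * V)%type} := pairL (idL U) (zlin U V).
Definition inrL U V : {linear V -> (U * V)%type} := pairL (zlin V U) (idL V).
Lemma prod_split U V W (L : {linear (U * V)%type -> W}) a b : L (a, b) = L (a, 0) + L (0, b).
Proof. rewrite -linearD. congr (L _). have -> : ((a, 0) + (0, b) : (U * V)%type) = (a + 0, 0 + b) by []. by rewrite addr0 add0r. Qed.
End Comb.

Section Split.
Variables (R : pzRingType) (n : natinf) (U V : lmodType R) (d : {linear U -> V}) (pi : {linear V -> V}).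
Hypothesis H1 : forall u, pi (d u) = d u.
Hypothesis H2 : forall M, Plt (natinf_succ n) M -> forall w : {linear M -> V},
  exists v : {linear M -> U}, forall m, pi (w m) = d (v m).
Hypothesis HP : lift_prop n V.

Lemma pi_el c : exists a, pi c = d a.
Proof.
case: (H2 (Plt_reg R n) (rlin c)) => v hv. exists (v 1). by rewrite -hv rlin1.
Qed.

Lemma pipi c : pi (pi c) = pi c.
Proof. by case: (pi_el c) => a ->; rewrite H1. Qed.

Definition gL : {linear (U * V)%type -> V} :=
  addL (compL d (fstL U V)) (compL (addL (idL V) (oppL pi)) (sndL U V)).
Lemma gLE a b : gL (a, b) = d a + (b - pi b). Proof. by []. Qed.
Definition AT := kerT gL.
Definition fL : {linear AT -> (U * V)%type} := mkLin (@val_lin _ _ _ gL).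
Lemma fLE x : fL x = val x. Proof. by []. Qed.

Lemma cores_lin (M : lmodType R) (v : {linear M -> (U * V)%type}) (H : forall m, gL (v m) = 0) :
  linear (fun m => (exist (kerP gL) (v m) (introT eqP (H m)) : AT)).
Proof. move=> a x y. apply: val_inj => /=. by rewrite linearP. Qed.

Lemma ses_ok : n_exact_ses n fL gL.
Proof.
split.
  split.
  - move=> x y; rewrite !fLE; exact: val_inj.
  - move=> b; split.
      move=> /eqP h. by exists (exist (kerP gL) b h).
    case=> x <-. rewrite fLE. exact/eqP/(valP x).
  - move=> c. case: (pi_el c) => a ha. exists (a, c).
    by rewrite gLE -ha addrC subrK.
move=> M hM. split.
- move=> u hu m. apply: val_inj. by rewrite /= -fLE hu.
- move=> v; split.
    move=> H. by exists (mkLin (cores_lin H)).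
  case=> u hu m. rewrite hu fLE. exact/eqP/(valP (u m)).
- move=> w. case: (H2 hM w) => a ha. exists (pairL a w) => m.
  by rewrite (_ : pairL a w m = (a m, w m)) // gLE -ha addrC subrK.
Qed.

Lemma split_lift : exists s : {linear V -> U}, forall x, d (s x) = pi x.
Proof.
case: (HP ses_ok (idL V)) => v hv.
exists (compL (fstL U V) v) => x /=.
have e : x = gL (v x) := hv x. rewrite [in RHS]e.
case: (v x) => a b /=.
by rewrite !linearD linearN pipi H1 subrr addr0.
Qed.
End Split.

From mathcomp Require Import zify.
Section Contract.
Variables (R : pzRingType) (n : natinf) (C : int -> lmodType R) (d : forall i, {linear C i -> C (i+1)}).
Hypothesis dd : forall i x, d (i+1) (d i x) = 0.
Hypothesis nex : @n_exact_cplx R n C (fun i => d i).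
Hypothesis proj : forall i, lift_prop n (C i).
Hypothesis bnd : exists N : int, forall i, N < i -> forall x : C i, x = 0.

Lemma exact_el i (z : C (i+1)) : d (i+1) z = 0 -> exists y, z = d i y.
Proof.
move=> hz. case: (nex (Plt_reg R n) (rlin z)) => H _.
case: H => [p|v hv]. by rewrite /= linearZ_LR hz scaler0.
exists (v 1). by rewrite -hv rlin1.
Qed.

Definition Sprop i := exists s : {linear C (i+1) -> C i}, forall x, d i (s (d i x)) = d i x.

Lemma Sstep i : Sprop (i+1) -> Sprop i.
Proof.
case=> s' hs'.
pose pi := addL (idL _) (oppL (compL s' (d (i+1)))).
have H1 : forall u, pi (d i u) = d i u.
  by move=> u; rewrite /= dd linear0 subr0.
have H2 : forall M, Plt (natinf_succ n) M -> forall w : {linear M -> C (i+1)},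
    exists v : {linear M -> C i}, forall m, pi (w m) = d i (v m).
  move=> M hM w. case: (nex hM (compL pi w)) => H _. apply: H => p /=.
  by rewrite linearB hs' subrr.
case: (split_lift H1 H2 (@proj (i+1))) => s hs.
exists s => x. by rewrite hs H1.
Qed.

Lemma Sall i : Sprop i.
Proof.
case: bnd => N hN.
have base : forall i, N <= i -> Sprop i.
  move=> j hj; exists (zlin _ _) => x. rewrite zlinE linear0. symmetry; apply: hN. lia.
have ind : forall k : nat, Sprop (N - k%:Z).
  elim=> [|k IH]; first by apply: base; lia.
  apply: Sstep. have -> : N - (k.+1)%:Z + 1 = N - k%:Z by lia. exact: IH.
case: (boolP (N <= i)) => hi; first exact: base.
have -> : i = N - (`|N - i|%N)%:Z by lia.
exact: ind.
Qed.

Definition sC i : {linear C (i+1) -> C i} := proj1_sig (constructive_indefinite_description _ (Sall i)).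
Lemma hsC i x : d i (sC i (d i x)) = d i x.
Proof. exact: (proj2_sig (constructive_indefinite_description _ (Sall i))). Qed.

Definition rho := icast (fun k => {linear C k -> C k}) (fun j => compL (d j) (sC j)).
Lemma rhoE j x : rho (j+1) x = d j (sC j x).
Proof. by rewrite /rho icastE. Qed.
Lemma rhoD i x : d i (rho i x) = 0.
Proof.
move: i x; apply: int_ind1 => j x. by rewrite rhoE dd.
Qed.
Lemma rho_Z j (z : C (j+1)) : d (j+1) z = 0 -> rho (j+1) z = z.
Proof. move=> /exact_el [y ->]. by rewrite rhoE hsC. Qed.

Definition hL i : {linear C (i+1) -> C i} :=
  let t := compL (sC i) (rho (i+1)) in addL t (oppL (compL (rho i) t)).
Lemma hLE i x : hL i x = sC i (rho (i+1) x) - rho i (sC i (rho (i+1) x)).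
Proof. by []. Qed.

Lemma contraction : forall i x, d i (hL i x) + hL (i+1) (d (i+1) x) = x.
Proof.
move=> i x. rewrite !hLE linearB rhoD subr0.
rewrite !rhoE hsC hsC.
set w := x - sC (i+1) (d (i+1) x).
have hw : d (i+1) w = 0 by rewrite linearB hsC subrr.
have e : sC (i+1) (d (i+1) x) = x - w by rewrite /w subKr.
have hw2 : d i (sC i w) = w by rewrite -rhoE rho_Z.
by rewrite e (linearB (sC i)) (linearB (d i)) hw2 zh.
Qed.

Lemma contract_ex : exists h : forall i, {linear C (i+1) -> C i},
  forall i x, d i (h i x) + h (i+1) (d (i+1) x) = x.
Proof. exists hL; exact: contraction. Qed.
End Contract.

Lemma prod_splitN (R : pzRingType) (U V W : lmodType R) (L : {linear (U * V)%type -> W}) a b :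
  L (- a, b) = - L (a, 0) + L (0, b).
Proof.
rewrite prod_split; congr (_ + _); rewrite -linearN; congr (L _).
by rewrite (_ : - (a, 0) = (- a, - 0)) // oppr0.
Qed.

Lemma lift_prod (R : pzRingType) n (P Q : lmodType R) :
  lift_prop n P -> lift_prop n Q -> lift_prop n (P * Q)%type.
Proof.
move=> hP hQ A B Cm fA g hs w.
case: (hP _ _ _ _ _ hs (compL w (inlL P Q))) => v1 h1.
case: (hQ _ _ _ _ _ hs (compL w (inrL P Q))) => v2 h2.
exists (addL (compL v1 (fstL P Q)) (compL v2 (sndL P Q))) => -[p q].
rewrite (prod_split w) /= linearD -h1 -h2. by [].
Qed.

Section Main.
Variables (R : pzRingType) (n : natinf) (X Y : complex R) (f : forall i, {linear cobj X i -> cobj Y i}).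
Hypothesis hf : is_cochain_map f.

Lemma cone_lin i : linear (@cone_dif R X Y f i).
Proof.
move=> a [x y] [x' y'] /=. rewrite /cone_dif /=.
congr (_, _).
  by rewrite linearP opprD -scalerN.
rewrite !linearP addrACA -scalerDr. by [].
Qed.
Definition dC i : {linear cone_obj X Y i -> cone_obj X Y (i+1)} := mkLin (@cone_lin i).

Lemma ddC i z : dC (i+1) (dC i z) = 0.
Proof.
case: z => x y. change ((- cdif X (i+1+1) (- cdif X (i+1) x),
   f (i+1+1) (- cdif X (i+1) x) + cdif Y (i+1) (f (i+1) x + cdif Y i y)) = (0, 0)).
f_equal.
  by rewrite (linearN (cdif X (i+1+1))) opprK cdif2.
by rewrite (linearN (f (i+1+1))) hf (linearD (cdif Y (i+1))) cdif2 addr0 addNr.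
Qed.

Lemma main_contr (bX : bounded_above X) (bY : bounded_above Y)
  (pX : forall i, n_projective n (cobj X i)) (pY : forall i, n_projective n (cobj Y i))
  (hq : n_exact_cplx n (cone_dif f)) :
  exists h : forall i, {linear cone_obj X Y (i+1) -> cone_obj X Y i},
    forall i z, dC i (h i z) + h (i+1) (dC (i+1) z) = z.
Proof.
apply: (@contract_ex R n (cone_obj X Y) dC).
- exact: ddC.
- exact: hq.
- by move=> i; apply: lift_prod; apply: nproj_lift.
case: bX => NX hX; case: bY => NY hY.
exists (Num.max NX NY) => i hi [x y].
rewrite (hX (i+1) _ x); last by lia.
by rewrite (hY i _ y); last by lia.
Qed.

Section Blocks.
Variable h : forall i, {linear cone_obj X Y (i+1) -> cone_obj X Y i}.
Hypothesis hh : forall i z, dC i (h i z) + h (i+1) (dC (i+1) z) = z.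

Definition Aa i : {linear cobj X (i+1+1) -> cobj X (i+1)} :=
  compL (fstL _ _) (compL (h i) (inlL _ _)).
Definition Bb i : {linear cobj Y (i+1) -> cobj X (i+1)} :=
  compL (fstL _ _) (compL (h i) (inrL _ _)).
Definition Dd i : {linear cobj Y (i+1) -> cobj Y i} :=
  compL (sndL _ _) (compL (h i) (inrL _ _)).

Lemma F1 i (x : cobj X (i+1+1)) :
  Bb (i+1) (f (i+1+1) x) - x = cdif X (i+1) (Aa i x) + Aa (i+1) (cdif X (i+1+1) x).
Proof.
have := congr1 fst (@hh i (x, 0)).
rewrite /= /cone_dif /= linear0 addr0 (prod_splitN (h (i+1))) /= => e.
rewrite -[X in _ - X = _]e. exact: zh2.
Qed.

Lemma F2 i (y : cobj Y (i+1)) : Bb (i+1) (cdif Y (i+1) y) = cdif X (i+1) (Bb i y).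
Proof.
have := congr1 fst (@hh i (0, y)).
rewrite /= /cone_dif /= !linear0 ?oppr0 add0r.
move=> /eqP; rewrite addr_eq0 eqr_opp => /eqP ->. by [].
Qed.

Lemma F3 i (y : cobj Y (i+1)) :
  f (i+1) (Bb i y) - y = cdif Y i (- Dd i y) + (- Dd (i+1) (cdif Y (i+1) y)).
Proof.
have := congr1 snd (@hh i (0, y)).
rewrite /= /cone_dif /= !linear0 ?oppr0 add0r => e.
rewrite linearN -[X in _ - X = _]e. exact: zh3.
Qed.

Lemma heq : homotopy_equiv f.
Proof.
pose g := icast (fun k => {linear cobj Y k -> cobj X k}) Bb.
pose hX := icast (fun k => {linear cobj X (k+1) -> cobj X k}) Aa.
pose hY := fun i => oppL (Dd i).
exists g; split.
- rewrite /is_cochain_map. apply: int_ind1 => j y. rewrite /g !icastE. exact: F2.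
- exists hX. apply: int_ind1 => j x. rewrite /g /hX !icastE. exact: F1.
- exists hY => i y. rewrite /g icastE. exact: F3.
Qed.
End Blocks.
End Main.

Theorem proposition4p9 (R : pzRingType) (n : natinf) (X Y : complex R)
    (f : forall i, {linear cobj X i -> cobj Y i}) :
  bounded_above X -> bounded_above Y ->
  (forall i, n_projective n (cobj X i)) ->
  (forall i, n_projective n (cobj Y i)) ->
  n_quasi_iso n f ->
  homotopy_equiv f.
Proof.
move=> bX bY pX pY [hf hq].
case: (main_contr hf bX bY pX pY hq) => h hh.
exact: (heq hh).
Qed.
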